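(* Let $\Gamma$ be a finite connected $(G,2)$-distance-transitive graph of valency $k\ge2$. If $\gcd(b_1,k)=1$ and $c_2\mid k$, then $\Gamma$ is $(G,2)$-geodesic-transitive. In particular, if $\gcd(b_1,k)=1$ and $\gcd(b_1,c_2)=1$, then $\Gamma$ is $(G,2)$-geodesic-transitive.
   Context: For $G\le\mathrm{Aut}(\Gamma)$, $\Gamma$ is $(G,2)$-distance-transitive if its diameter is at least $2$, $G$ is vertex-transitive and $G_u$ is transitive on $\Gamma(u)$ and $\Gamma_2(u)$ for each $u$. For $u$ and $w$ at distance $i\le2$, $b_i$ (resp. $c_i$) denotes the number of neighbours of $w$ at distance $i+1$ (resp. $i-1$) from $u$; these are independent of $u,w$. A $2$-geodesic is a triple $(u,v,w)$ with $u\sim v\sim w$, $u\ne w$, $u\not\sim w$; $\Gamma$ is $(G,2)$-geodesic-transitive if it is $G$-arc-transitive, non-complete, and $G$ is transitive on $2$-geodesics. *)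

(* Defs.v *)
(* A finite simple graph is a symmetric irreflexive relation
   e on a finType T; G is a group of permutations of T acting by automorphisms. *)
From mathcomp Require Import all_boot all_fingroup.
Set Implicit Arguments. Unset Strict Implicit. Unset Printing Implicit Defensive.

Section Graphs.
Variables (T : finType) (e : rel T).

Definition is_aut (g : {perm T}) : Prop := forall x y, e (g x) (g y) = e x y.

Definition nbhd (u : T) : {set T} := [set v | e u v].

Definition dist2 (u : T) : {set T} :=
  [set w | [&& w != u, ~~ e u w & [exists v, e u v && e v w]]].

Definition diam_ge2 : Prop := exists u w, u != w /\ ~~ e u w.

Definition non_complete : Prop := exists u w, u != w /\ ~~ e u w.

Definition connected_graph : Prop := forall x y, connect e x y.

Definition vertex_transitive (G : {set {perm T}}) : Prop :=
  forall u v, exists2 g, g \in G & g u = v.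

Definition stab_transitive_on (G : {set {perm T}}) (u : T) (S : {set T}) : Prop :=
  forall v v', v \in S -> v' \in S -> exists2 g, g \in G & g u = u /\ g v = v'.

Definition two_distance_transitive (G : {set {perm T}}) : Prop :=
  [/\ diam_ge2, vertex_transitive G &
      forall u, stab_transitive_on G u (nbhd u) /\ stab_transitive_on G u (dist2 u)].

Definition arc_transitive (G : {set {perm T}}) : Prop :=
  forall u v u' v', e u v -> e u' v' ->
    exists2 g, g \in G & g u = u' /\ g v = v'.

Definition two_geodesic (u v w : T) : bool :=
  [&& e u v, e v w, u != w & ~~ e u w].

Definition two_geodesic_transitive (G : {set {perm T}}) : Prop :=
  [/\ arc_transitive G, non_complete &
      forall u v w u' v' w', two_geodesic u v w -> two_geodesic u' v' w' ->
        exists2 g, g \in G & [/\ g u = u', g v = v' & g w = w']].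

End Graphs.

(* Main.v *)
Require Import Defs.
From mathcomp Require Import all_boot all_fingroup.
From mathcomp Require Import zify.

Lemma sum_ind_card (T : finType) (A : {set T}) (P : pred T) :
  \sum_(i in A) (P i : nat) = #|[set i in A | P i]|.
Proof.
rewrite -sum1_card big_mkcond [RHS]big_mkcond /=.
by apply: eq_bigr => i _; rewrite !inE; case: (i \in A); case: (P i).
Qed.

Lemma double_count (T : finType) (A B : {set T}) (Q : T -> T -> bool) :
  \sum_(x in A) #|[set y in B | Q x y]| = \sum_(y in B) #|[set x in A | Q x y]|.
Proof.
rewrite (eq_bigr (fun x => \sum_(y in B) (Q x y : nat))); last first.
  by move=> x _; rewrite sum_ind_card.
rewrite exchange_big /=; apply: eq_bigr => y _.
by rewrite (@sum_ind_card _ A (fun x => Q x y)).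
Qed.

Lemma arith (k m n d b c : nat) : 0 < k -> k * m = d * n -> k * b = d * c ->
  coprime b c -> 0 < m -> m <= b -> m = b.
Proof.
move=> k0 h1 h2 cop m0 mb.
have h3 : m * c = n * b.
  apply/eqP; rewrite -(eqn_pmul2l k0) mulnA h1 mulnCA h2; apply/eqP; rewrite -mulnA; by rewrite mulnCA.
have : b %| m by rewrite -(Gauss_dvdl m cop) h3 dvdn_mull.
move/(dvdn_leq m0) => bm; lia.
Qed.
Theorem lemma5p6 (T : finType) (e : rel T) (G : {group {perm T}})
    (k b1 c2 : nat)
    (e_sym : symmetric e) (e_irr : irreflexive e)
    (G_aut : forall g, g \in G -> is_aut e g)
    (conn : connected_graph e)
    (dt : two_distance_transitive e G)
    (val : forall u, #|nbhd e u| = k) (k_ge2 : 2 <= k)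
    (b1_def : forall u w, e u w -> #|[set x in nbhd e w | x \in dist2 e u]| = b1)
    (c2_def : forall u w, w \in dist2 e u -> #|[set x in nbhd e w | e u x]| = c2) :
  (coprime b1 k -> c2 %| k -> two_geodesic_transitive e G) /\
  (coprime b1 k -> coprime b1 c2 -> two_geodesic_transitive e G).
Proof.
case: dt => diam vt st.
have geo_aut : forall g, g \in G -> forall a b c, two_geodesic e a b c ->
    two_geodesic e (g a) (g b) (g c).
  by move=> g Hg a b c; rewrite /two_geodesic !(G_aut g Hg) (inj_eq perm_inj).
have d2P : forall a c, (c \in dist2 e a) = [exists b, two_geodesic e a b c].
  move=> a c; rewrite inE; apply/and3P/existsP.
    case=> ne na /existsP[b /andP[h1 h2]]; exists b.
    by rewrite /two_geodesic h1 h2 na eq_sym ne.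
  case=> b /and4P[h1 h2 h3 h4]; split; first by rewrite eq_sym.
    by [].
  by apply/existsP; exists b; rewrite h1 h2.
have core : coprime b1 c2 -> forall u v w, two_geodesic e u v w ->
    forall x y, two_geodesic e u x y ->
    exists2 g, g \in G & [/\ g u = u, g v = x & g w = y].
  move=> cop u v w guvw.
  pose R x y := [exists g in G, [&& g u == u, g v == x & g w == y]].
  have R_act : forall h, h \in G -> h u = u -> forall x y, R x y -> R (h x) (h y).
    move=> h hG hu x y /existsP[g /and4P[gG /eqP gu /eqP gv /eqP gw]].
    apply/existsP; exists (g * h)%g; rewrite groupM // !permM gu gv gw hu.
    by rewrite !eqxx.
  have Rgeo : forall x y, R x y -> two_geodesic e u x y.
    move=> x y /existsP[g /and4P[gG /eqP gu /eqP gv /eqP gw]].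
    by rewrite -gu -gv -gw; apply: geo_aut.
  have rowF : forall h, h \in G -> h u = u -> forall x,
      [set y | R (h x) y] = h @: [set y | R x y].
    move=> h hG hu x; apply/setP => y; rewrite inE; apply/idP/imsetP.
      move=> H; exists (h^-1 y)%g; last by rewrite permKV.
      rewrite inE; have hiu : (h^-1)%g u = u by rewrite -{1}hu permK.
      by have := R_act _ (groupVr hG) hiu _ _ H; rewrite permK.
    by case=> y'; rewrite inE => H ->; apply: R_act.
  have colF : forall h, h \in G -> h u = u -> forall y,
      [set x | R x (h y)] = h @: [set x | R x y].
    move=> h hG hu y; apply/setP => x; rewrite inE; apply/idP/imsetP.
      move=> H; exists (h^-1 x)%g; last by rewrite permKV.
      rewrite inE; have hiu : (h^-1)%g u = u by rewrite -{1}hu permK.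
      by have := R_act _ (groupVr hG) hiu _ _ H; rewrite permK.
    by case=> x'; rewrite inE => H ->; apply: R_act.
  have vN : v \in nbhd e u by rewrite inE; case/and4P: guvw.
  have wD : w \in dist2 e u by rewrite d2P; apply/existsP; exists v.
  have rowC : forall x, x \in nbhd e u -> #|[set y | R x y]| = #|[set y | R v y]|.
    move=> x xN; have [h hG [hu hv]] := (st u).1 v x vN xN.
    by rewrite -hv rowF // card_imset //; apply: perm_inj.
  have colC : forall y, y \in dist2 e u -> #|[set x | R x y]| = #|[set x | R x w]|.
    move=> y yD; have [h hG [hu hw]] := (st u).2 w y wD yD.
    by rewrite -hw colF // card_imset //; apply: perm_inj.
  have rowE : forall x, [set y in dist2 e u | R x y] = [set y | R x y].
    move=> x; apply/setP => y; rewrite in_set [RHS]in_set; case Rxy: (R x y); rewrite ?andbF ?andbT //.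
    by rewrite d2P; apply/existsP; exists x; apply: Rgeo.
  have colE : forall y, [set x in nbhd e u | R x y] = [set x | R x y].
    move=> y; apply/setP => x; rewrite !inE; case Rxy: (R x y); rewrite ?andbF ?andbT //.
    by case/and4P: (Rgeo _ _ Rxy).
  have cnt1 : k * #|[set y | R v y]| = #|dist2 e u| * #|[set x | R x w]|.
    have := @double_count _ (nbhd e u) (dist2 e u) R.
    rewrite (eq_bigr (fun _ => #|[set y | R v y]|)); last by move=> x xN; rewrite rowE rowC.
    rewrite [RHS](eq_bigr (fun _ => #|[set x | R x w]|)); last by move=> y yD; rewrite colE colC.
    by rewrite !sum_nat_const val mulnC => ->; rewrite mulnC.
  have cnt2 : k * b1 = #|dist2 e u| * c2.
    have := @double_count _ (nbhd e u) (dist2 e u) (two_geodesic e u).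
    rewrite (eq_bigr (fun _ => b1)); last first.
      move=> x xN; rewrite -(b1_def u x); last by rewrite inE in xN.
      apply: eq_card => y; rewrite !inE in xN *.
      rewrite /two_geodesic xN /=; apply/idP/idP.
        by case/andP=> /and3P[-> -> ->] /and3P[-> _ _].
      case/andP=> -> /and3P[h1 -> ->]; by rewrite h1 eq_sym h1.
    rewrite [RHS](eq_bigr (fun _ => c2)); last first.
      move=> y yD; rewrite -(c2_def u y) //.
      apply: eq_card => x; rewrite !inE in yD *.
      case/and3P: yD => ne na _.
      rewrite /two_geodesic eq_sym ne na !andbT (e_sym y x).
      by case: (e u x); case: (e x y).
    by rewrite !sum_nat_const val mulnC => ->; rewrite mulnC.
  have m0 : 0 < #|[set y | R v y]|.
    apply/card_gt0P; exists w; rewrite inE; apply/existsP; exists 1%g.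
    by rewrite group1 !perm1 !eqxx.
  have sub : forall x, x \in nbhd e u ->
      [set y | R x y] \subset [set y in nbhd e x | y \in dist2 e u].
    move=> x xN; apply/subsetP => y; rewrite in_set => Rxy; rewrite in_set inE.
    have g := Rgeo _ _ Rxy; case/and4P: (g) => _ -> _ _ /=.
    by rewrite d2P; apply/existsP; exists x.
  have mb : #|[set y | R v y]| <= b1.
    by rewrite -(b1_def u v); [apply: subset_leq_card; apply: sub | rewrite inE in vN].
  have k0 : 0 < k by apply: leq_trans k_ge2.
  have mE := @arith _ _ _ _ _ _ k0 cnt1 cnt2 cop m0 mb.
  move=> x y gxy.
  have xN : x \in nbhd e u by rewrite inE; case/and4P: gxy.
  have EQ : [set y | R x y] == [set y in nbhd e x | y \in dist2 e u].
    have xN2 : e u x by rewrite inE in xN.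
    by rewrite eqEcard sub // rowC // mE b1_def // leqnn.
  have : y \in [set y in nbhd e x | y \in dist2 e u].
    rewrite in_set inE; case/and4P: (gxy) => _ -> _ _ /=.
    by rewrite d2P; apply/existsP; exists x.
  rewrite -(eqP EQ) inE => /existsP[g /and4P[gG /eqP gu /eqP gv /eqP gw]].
  by exists g.
have final : coprime b1 c2 -> two_geodesic_transitive e G.
  move=> cop; split.
  - move=> u v u' v' euv eu'v'.
    have [g gG gu] := vt u u'.
    have gvN : g v \in nbhd e u' by rewrite inE -gu (G_aut g gG).
    have v'N : v' \in nbhd e u' by rewrite inE.
    have [h hG [hu hv]] := (st u').1 (g v) v' gvN v'N.
    exists (g * h)%g; first by rewrite groupM.
    by rewrite !permM gu hu hv.
  - exact: diam.
  - move=> u v w u' v' w' g1 g2.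
    have [g0 g0G g0u] := vt u' u.
    have g2' := geo_aut g0 g0G _ _ _ g2; rewrite g0u in g2'.
    have [g gG [gu gv gw]] := core cop u v w g1 _ _ g2'.
    exists (g * g0^-1)%g; first by rewrite groupM ?groupV.
    by rewrite !permM gu gv gw -{1}g0u !permK.
split; [move=> cop1 dk; apply: final; apply: coprime_dvdr dk cop1 | move=> _; exact: final].
Qed.
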